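(* Let $(Y,U)$ be discrete random variables with $Y$ taking values in a finite set $\mathcal{Y}$, let $\mu\in(0,\frac12)$ and $\epsilon>0$. If $$\Pr\left(|h(Y|U)-c|>\epsilon\right)<\mu$$ for some $c>0$, then $$\Pr\left(|h(Y|U)-\mathbb{H}(Y|U)|>2\epsilon+\mu\log_2\frac{|\mathcal{Y}|}{\mu^2}\right)<\mu.$$
   Context: $h(Y|U)$ denotes the random variable $-\log_2 p_{Y|U}(Y|U)$; $\mathbb{H}(Y|U)$ is the conditional entropy. *)

(* Defs.v *)
From HB Require Import structures.
From mathcomp Require Import all_boot all_order all_algebra.
From mathcomp Require Import all_classical all_reals all_analysis.
Set Implicit Arguments. Unset Strict Implicit. Unset Printing Implicit Defensive.
Import Order.TTheory GRing.Theory Num.Theory.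
Local Open Scope classical_set_scope.
Local Open Scope ring_scope.

(* A pair of discrete random variables (Y,U) is described by its joint pmf
   p y u = Pr(Y = y, U = u), Y ranging over a finite type, U over a countable
   type. *)
Section InfoDefs.
Variables (R : realType) (Y : finType) (U : countType).
Implicit Type p : Y -> U -> R.

Definition is_joint_pmf p : Prop :=
  (forall y u, 0 <= p y u) /\
  (\esum_(x in [set: Y * U]) (p x.1 x.2)%:E = 1)%E.

Definition log2 (x : R) : R := ln x / ln 2.

Definition pU p (u : U) : R := \sum_(y : Y) p y u.

Definition pYgU p (y : Y) (u : U) : R := p y u / pU p u.

Definition hYU p (y : Y) (u : U) : R := - log2 (pYgU p y u).

Definition Prob p (A : Y -> U -> Prop) : \bar R :=
  \esum_(x in [set x : Y * U | A x.1 x.2]) (p x.1 x.2)%:E.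

(* conditional entropy H(Y|U) = E[h(Y|U)] (a finite nonnegative sum,
   bounded by log2 |Y|) *)
Definition condEnt p : R :=
  fine (\esum_(x in [set: Y * U]) (p x.1 x.2 * hYU p x.1 x.2)%:E).

End InfoDefs.

(* Main.v *)
Require Import Defs.
From HB Require Import structures.
From mathcomp Require Import all_boot all_order all_algebra.
From mathcomp Require Import all_classical all_reals all_analysis.
From mathcomp Require Import ring lra.
Import Order.TTheory GRing.Theory Num.Theory.
Local Open Scope ring_scope.

Lemma ln_le_sub1 (R : realType) (z : R) : 0 < z -> ln z <= z - 1.
Proof.
move=> z0; have := @le_ln1Dx R (z - 1).
have -> : 1 + (z - 1) = z by lra.
by apply; lra.
Qed.

Lemma esumZ (R : realType) (T : choiceType) (I : set T) (k : R) (a : T -> \bar R) :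
  0 <= k -> (forall x, (0 <= a x)%E) ->
  (\esum_(x in I) (k%:E * a x) = k%:E * \esum_(x in I) a x)%E.
Proof.
move=> k0 a0; rewrite /esum -ereal_supZl //; last first.
  apply/set0P; exists (\sum_(x \in set0) a x)%E; exists set0 => //.
  exact: fsets_set0.
rewrite image_comp; congr ereal_sup; apply: eq_imagel => X _ /=.
by rewrite ge0_mule_fsumr.
Qed.

Lemma esum_finT (R : realType) (Y : finType) (F : Y -> \bar R) :
  (forall y, (0 <= F y)%E) ->
  (\esum_(y in [set: Y]) F y = \sum_(y : Y) F y)%E.
Proof.
move=> F0; rewrite esum_fset //; last exact: finite_finset.
rewrite (fsbigE (enum Y)) ?enum_uniq //.
  by rewrite big_enum_cond /=; apply: eq_bigl => y; rewrite in_setT.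
by move=> y; rewrite mem_enum.
Qed.

Lemma ln2_gt0 (R : realType) : 0 < ln (2 : R).
Proof. by apply: ln_gt0; rewrite ltr1n. Qed.

Lemma P1 (R : realType) (pv P : R) : 0 <= pv -> pv <= P ->
  0 <= - (ln (pv / P) / ln 2).
Proof.
move=> p0 pP; rewrite oppr_ge0 pmulr_lle0 ?invr_gt0 ?ln2_gt0 //.
apply: ln_le0; have [->|P0] := eqVneq P 0; first by rewrite invr0 mulr0.
by rewrite ler_pdivrMr ?mul1r // lt_neqAle eq_sym P0 (le_trans p0 pP).
Qed.

Lemma P2 (R : realType) (pv P lam : R) : 0 <= pv -> pv <= P -> 0 < lam ->
  0 <= -1 - ln lam ->
  ln 2 * (pv * - (ln (pv / P) / ln 2)) <= lam * P + (-1 - ln lam) * pv.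
Proof.
move=> p0 pP l0 L0.
have l2 := @ln2_gt0 R.
have [->|pv0] := eqVneq pv 0.
  rewrite !(mul0r, mulr0, addr0); apply: mulr_ge0; lra.
have pvp : 0 < pv by rewrite lt_neqAle eq_sym pv0.
have Pp : 0 < P by apply: lt_le_trans pP.
have h1 : ln (lam * (P / pv)) = ln lam + ln (P / pv).
  by rewrite lnM // posrE divr_gt0.
have h2 : ln (P / pv) = - ln (pv / P).
  by rewrite -lnV ?invf_div // posrE divr_gt0.
have h3 := @ln_le_sub1 R (lam * (P / pv)).
have e : lam * (P / pv) * pv = lam * P by field; rewrite lt0r_neq0.
have e2 : ln 2 * (pv * - (ln (pv / P) / ln 2)) = - (pv * ln (pv / P)).
  by field; rewrite gt_eqF.
rewrite e2.
have h4 : 0 < lam * (P / pv) by rewrite mulr_gt0 // divr_gt0.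
move: (h3 h4); rewrite h1 h2 => h5.
nra.
Qed.

Lemma P3 (R : realType) (pv P Z : R) : 0 <= pv -> pv <= P -> 0 < Z ->
  ln Z / ln 2 <= - (ln (pv / P) / ln 2) -> pv <= P / Z.
Proof.
move=> p0 pP Z0 H.
have l2 := @ln2_gt0 R.
have [->|pv0] := eqVneq pv 0; first by rewrite divr_ge0 // ?(le_trans p0 pP) // ltW.
have pvp : 0 < pv by rewrite lt_neqAle eq_sym pv0.
have Pp : 0 < P by apply: lt_le_trans pP.
move: H; rewrite -mulNr ler_pM2r ?invr_gt0 // => H.
have : ln (pv / P) <= ln (Z^-1) by rewrite lnV ?posrE //; lra.
rewrite ler_ln ?posrE ?divr_gt0 ?invr_gt0 // ler_pdivrMr //.
by rewrite mulrC.
Qed.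

Lemma esum_pairT (R : realType) (Y : finType) (U : countType)
  (g : Y -> U -> \bar R) : (forall y u, (0 <= g y u)%E) ->
  (\esum_(x in [set: Y * U]) g x.1 x.2 = \sum_(y : Y) \esum_(u in [set: U]) g y u)%E.
Proof.
move=> g0; rewrite -esum_finT; last by move=> y; apply: esum_ge0.
rewrite esum_esum //; congr esum; apply/seteqP; split => x //=.
Qed.

Lemma pv_le_pU (R : realType) (Y : finType) (U : countType) (p : Y -> U -> R) y u :
  (forall y u, 0 <= p y u) -> p y u <= pU p u.
Proof.
move=> p0; rewrite /pU (bigD1 y) //= lerDl sumr_ge0 // => *; exact: p0.
Qed.

Lemma esum_pU (R : realType) (Y : finType) (U : countType) (p : Y -> U -> R) :
  is_joint_pmf p ->
  (\esum_(x in [set: Y * U]) (pU p x.2)%:E = (#|Y|%:R)%:E)%E.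
Proof.
move=> [p0 p1].
have pU0 u : 0 <= pU p u by rewrite /pU sumr_ge0.
rewrite (@esum_pairT _ _ _ (fun y u => (pU p u)%:E)); last by move=> y u; rewrite lee_fin.
have E : (\esum_(u in [set: U]) (pU p u)%:E = 1)%E.
  rewrite -p1 (@esum_pairT _ _ _ (fun y u => (p y u)%:E)); last by move=> y u; rewrite lee_fin.
  rewrite -esum_sum //; last by move=> *; rewrite lee_fin.
  by apply: eq_esum => u _; rewrite /pU sumEFin.
under eq_bigr do rewrite E.
by rewrite sumEFin sumr_const.
Qed.

Lemma esum_split (R : realType) (T : choiceType) (A : set T) (f : T -> \bar R) :
  (forall x, (0 <= f x)%E) ->
  (\esum_(x in [set: T]) f x = \esum_(x in A) f x + \esum_(x in ~` A) f x)%E.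
Proof. by move=> f0; rewrite (esumID A setT) // !setTI. Qed.

Lemma esum_sub (R : realType) (T : choiceType) (A B : set T) (f : T -> \bar R) :
  (B `<=` A)%classic -> (forall x, (0 <= f x)%E) ->
  (\esum_(x in B) f x <= \esum_(x in A) f x)%E.
Proof.
move=> BA f0; rewrite (esumID B A) // setIidr //; apply: leeDl.
exact: esum_ge0.
Qed.

Lemma fin_bound (R : realType) (x : \bar R) (y : R) :
  (0 <= x)%E -> (x <= y%:E)%E -> x = (fine x)%:E.
Proof.
by move=> x0 xy; rewrite fineK // ge0_fin_numE // (le_lt_trans xy) // ltry.
Qed.

Lemma ln2_ge_half (R : realType) : 1 / 2 <= ln (2 : R).
Proof.
have h := @ln_le_sub1 R (2^-1) ltac:(by rewrite invr_gt0).
rewrite lnV ?posrE // in h; lra.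
Qed.

Theorem corollary9 (R : realType) (Y : finType) (U : countType)
  (p : Y -> U -> R) (mu eps c : R) :
  is_joint_pmf p ->
  0 < mu -> mu < 1 / 2 -> 0 < eps -> 0 < c ->
  (Prob p (fun y u => (`|hYU p y u - c| > eps)%R) < mu%:E)%E ->
  (Prob p (fun y u =>
      (`|hYU p y u - condEnt p| > 2 * eps + mu * log2 (#|Y|%:R / mu ^+ 2))%R)
   < mu%:E)%E.
Proof.
move=> pmf mu0 mu12 eps0 c0 HA.
have [p0 p1] := pmf.
have l2 := @ln2_gt0 R.
have l2h := @ln2_ge_half R.
have pP y u : p y u <= pU p u by apply: (@pv_le_pU R Y U p y u p0).
have pU0 u : 0 <= pU p u by rewrite /pU sumr_ge0.
have SP := @esum_pU _ _ _ _ pmf.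
have Yn0 : (#|Y| != 0)%N.
  case: (pickP (@predT Y)) => [y0 _ | Y0].
    by apply/eqP => /card0_eq /(_ y0); rewrite !inE.
  move: p1; rewrite esum1; last by move=> [y u] _; move: (Y0 y) => /=.
  by move=> /eqP; rewrite eq_sym onee_eq0.
have Y1 : (1 : R) <= #|Y|%:R by rewrite ler1n lt0n.
set Z := (#|Y|%:R / mu ^+ 2 : R).
have Z4 : 4 < Z.
  rewrite /Z ltr_pdivlMr ?exprn_gt0 //; nra.
have Z0 : 0 < Z by lra.
set lz := ln Z.
have lz1 : 1 <= lz.
  have : ln 4 <= lz by rewrite /lz ler_ln ?posrE //; lra.
  have -> : (4 : R) = 2 * 2 by lra.
  rewrite lnM ?posrE //; lra.
set lam := Z^-1.
have lam0 : 0 < lam by rewrite invr_gt0.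
have lnlam : ln lam = - lz by rewrite /lam lnV ?posrE.
have lamY : lam * #|Y|%:R = mu ^+ 2.
  rewrite /lam /Z invf_div; field.
  by rewrite pnatr_eq0.
have hE y u : hYU p y u = - (ln (p y u / pU p u) / ln 2) by [].
have h0 y u : 0 <= hYU p y u by rewrite hE; apply: P1.
move: HA; rewrite /Prob /=.
set A := [set x : Y * U | eps < `|hYU p x.1 x.2 - c|]%classic => HA.
have pE0 (x : Y * U) : (0 <= (p x.1 x.2)%:E)%E by rewrite lee_fin.
have Psplit := @esum_split _ _ A _ pE0.
rewrite p1 in Psplit.
have SA0 : (0 <= \esum_(x in A) (p x.1 x.2)%:E)%E by apply: esum_ge0.
have SC0 : (0 <= \esum_(x in ~` A) (p x.1 x.2)%:E)%E by apply: esum_ge0.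
have SA1 : (\esum_(x in A) (p x.1 x.2)%:E <= 1%:E)%E.
  by rewrite Psplit leeDl.
have SC1 : (\esum_(x in ~` A) (p x.1 x.2)%:E <= 1%:E)%E.
  by rewrite Psplit leeDr.
set qA := fine (\esum_(x in A) (p x.1 x.2)%:E).
set qC := fine (\esum_(x in ~` A) (p x.1 x.2)%:E).
have qAE := @fin_bound _ _ 1 SA0 SA1.
have qCE := @fin_bound _ _ 1 SC0 SC1.
rewrite -/qA in qAE; rewrite -/qC in qCE.
have qsum : qA + qC = 1.
  by apply/eqP; rewrite -eqe EFinD -qAE -qCE -Psplit.
have qA0 : 0 <= qA by rewrite -lee_fin -qAE.
have qC0 : 0 <= qC by rewrite -lee_fin -qCE.
have qAmu : qA < mu by rewrite -lte_fin -qAE.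
set Hs := \esum_(x in [set: Y * U]) (p x.1 x.2 * hYU p x.1 x.2)%:E.
have phE0 (x : Y * U) : (0 <= (p x.1 x.2 * hYU p x.1 x.2)%:E)%E.
  by rewrite lee_fin mulr_ge0.
have HsE := @esum_split _ _ A _ phE0.
have notA x : ~ A x -> c - eps <= hYU p x.1 x.2 <= c + eps.
  move=> /negP; rewrite /A /= -leNgt ler_norml => /andP[h1 h2].
  by apply/andP; split; lra.
have UB1 : (\esum_(x in ~` A) (p x.1 x.2 * hYU p x.1 x.2)%:E <= ((c + eps) * qC)%:E)%E.
  apply: (@le_trans _ _ (\esum_(x in ~` A) ((c + eps)%:E * (p x.1 x.2)%:E))%E).
    apply: le_esum => x /= /notA /andP[_ hx].
    rewrite -EFinM lee_fin [X in _ <= X]mulrC; exact: ler_wpM2l.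
  rewrite esumZ //; last lra.
  by rewrite qCE -EFinM.
have pw x : p x.1 x.2 * hYU p x.1 x.2 <=
    (lam / ln 2) * pU p x.2 + ((lz - 1) / ln 2) * p x.1 x.2.
  have H := @P2 R (p x.1 x.2) (pU p x.2) lam (p0 _ _) (pP _ _) lam0
    ltac:(rewrite lnlam; lra).
  rewrite lnlam -hE in H.
  rewrite -(ler_pM2l l2); apply: (le_trans H).
  rewrite le_eqVlt; apply/orP; left; apply/eqP; field; exact: lt0r_neq0.
have UB2 : (\esum_(x in A) (p x.1 x.2 * hYU p x.1 x.2)%:E <=
    (lam / ln 2 * #|Y|%:R + (lz - 1) / ln 2 * qA)%:E)%E.
  apply: (@le_trans _ _ (\esum_(x in A) ((lam / ln 2)%:E * (pU p x.2)%:E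
        + ((lz - 1) / ln 2)%:E * (p x.1 x.2)%:E))%E).
    by apply: le_esum => x _; rewrite -!EFinM -EFinD lee_fin.
  have a0 : 0 <= lam / ln 2 by rewrite divr_ge0 // ltW.
  have b0 : 0 <= (lz - 1) / ln 2 by rewrite divr_ge0 ?subr_ge0 // ltW.
  rewrite esumD; first last.
  - by move=> x _; rewrite -EFinM lee_fin mulr_ge0.
  - by move=> x _; rewrite -EFinM lee_fin mulr_ge0.
  rewrite esumZ //; last by move=> x; rewrite lee_fin.
  rewrite esumZ //.
  rewrite EFinD; apply: leeD.
    rewrite (EFinM (lam / ln 2)); apply: lee_wpmul2l; first by rewrite lee_fin.
    rewrite -SP; apply: esum_sub => // x; rewrite lee_fin.
    by [].
  by rewrite qAE EFinM.
have Hs0 : (0 <= Hs)%E by apply: esum_ge0.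
have HsUB : (Hs <= (lam / ln 2 * #|Y|%:R + (lz - 1) / ln 2 * qA + (c + eps) * qC)%:E)%E.
  by rewrite /Hs HsE EFinD; apply: leeD.
have HsF : Hs = (condEnt p)%:E := @fin_bound _ _ _ Hs0 HsUB.
set H := condEnt p in HsF *.
have Hup : H <= lam / ln 2 * #|Y|%:R + (lz - 1) / ln 2 * qA + (c + eps) * qC.
  by rewrite -lee_fin -HsF.
have H0 : 0 <= H by rewrite -lee_fin -HsF.
set t := lz / ln 2.
have t0 : 0 <= t by rewrite /t divr_ge0 ?(ltW l2) //; lra.
have Hup2 : H <= c + eps + mu * t.
  apply: (le_trans Hup).
  have e1 : lam / ln 2 * #|Y|%:R + (lz - 1) / ln 2 * qA =
      (mu ^+ 2 + (lz - 1) * qA) / ln 2.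
    by rewrite -lamY; field; exact: lt0r_neq0.
  have e2 : mu * t = (mu * lz) / ln 2 by rewrite /t mulrA.
  rewrite e1 e2.
  have k : (mu ^+ 2 + (lz - 1) * qA) / ln 2 <= (mu * lz) / ln 2.
    rewrite ler_pM2r ?invr_gt0 //; nra.
  nra.
have Hlow : c - eps - mu * t <= H.
  case: (leP (c - eps) 0) => ce; first nra.
  have clt : c - eps < t.
    rewrite ltNge; apply/negP => Hle.
    have : (qC%:E <= (lam * #|Y|%:R)%:E)%E.
      rewrite -qCE.
      apply: (@le_trans _ _ (\esum_(x in ~` A) (lam%:E * (pU p x.2)%:E))%E).
        apply: le_esum => x /= /notA /andP[hx _].
        rewrite -EFinM lee_fin.
        have := @P3 R (p x.1 x.2) (pU p x.2) Z (p0 _ _) (pP _ _) Z0.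
        rewrite -hE => Hp; rewrite mulrC; apply: Hp.
        rewrite -/lz -/t; lra.
      rewrite esumZ; [|exact: ltW|by move=> x; rewrite lee_fin].
      rewrite EFinM; apply: lee_wpmul2l; first by rewrite lee_fin ltW.
      by rewrite -SP; apply: esum_sub => // x; rewrite lee_fin.
    rewrite lee_fin lamY => qCle.
    nra.
  have : (((c - eps) * qC)%:E <= Hs)%E.
    rewrite /Hs HsE; apply: (@le_trans _ _ (\esum_(x in ~` A) (p x.1 x.2 * hYU p x.1 x.2)%:E)); last first.
      by apply: leeDr; apply: esum_ge0.
    apply: (@le_trans _ _ (\esum_(x in ~` A) ((c - eps)%:E * (p x.1 x.2)%:E))%E).
      by rewrite esumZ ?qCE -?EFinM //; lra.
    apply: le_esum => x /= /notA /andP[hx _].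
    rewrite -EFinM lee_fin [X in X <= _]mulrC; exact: ler_wpM2l.
  rewrite HsF lee_fin => Hl.
  nra.
apply: le_lt_trans HA; apply: esum_sub => // x /= HB.
rewrite /A /= ltNge; apply/negP; rewrite ler_norml => /andP[h1 h2].
move: HB; rewrite /log2 -/Z -/lz -/t ltr_normr => /orP[]; lra.
Qed.
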